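(* Let $\lambda\in\Lambda$ be such that $V_O\cap V_\lambda\neq\emptyset$. Then $V_O\cap V_\lambda$ is contained in an affine subspace of $H$ of codimension equal to the genus of the oriented graph $\mathrm{supp}(\lambda)$. In particular, if $V_O\cap V_\lambda$ is a face of codimension one of $V_O$, then $\mathrm{supp}(\lambda)$ is a circuit $C$ and $\lambda=x^C$.
   Context: $G=(V,E)$ is a finite connected graph, possibly with parallel edges and loops; $\mathbb E$ is the set of oriented edges ($e$ and its reverse $\bar e$). Real $1$-chains $x:\mathbb E\to\mathbb R$ satisfy $x_{\bar e}=-x_e$; $\langle x,y\rangle=\sum_{e\in E}x_ey_e$, $q(x)=\langle x,x\rangle$. A flow satisfies $\sum_{e\text{ with tail }v}x_e=0$ at every vertex $v$; $H$ is the space of real flows and $\Lambda$ the lattice of integer flows. $V_\lambda=\{x\in H: q(x-\lambda)\le q(x-\mu)\ \forall\mu\in\Lambda\}$, $O$ the origin. For a flow $x$, $\mathrm{supp}(x)=\{e\in\mathbb E: x_e>0\}$, viewed as an oriented subgraph; its genus is the first Betti number of the underlying graph. A circuit is an orientation of a cycle as a directed cycle (a loop is a circuit of length one). For an oriented subgraph $D$ (containing at most one of $e,\bar e$ per edge), $x^D$ is the $1$-chain with $x^D_e=1$ if $e\in D$, $-1$ if $\bar e\in D$, $0$ otherwise. *)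

(* Defs.v *)
From HB Require Import structures.
From mathcomp Require Import all_boot all_order all_algebra.
Set Implicit Arguments. Unset Strict Implicit. Unset Printing Implicit Defensive.
Import Order.TTheory GRing.Theory Num.Theory.
Local Open Scope ring_scope.

(* A finite graph G with vertex set 'I_n and edge set 'I_m (parallel edges and
   loops allowed); each edge e carries a reference orientation src e -> tgt e.
   The oriented edges are the pairs (e, b) : 'I_m * bool, where (e, true) is
   e in its reference orientation and (e, false) is its reverse \bar e.
   A real 1-chain x (with x_{\bar e} = - x_e) is encoded by the row vector
   x : 'rV[R]_m of its values on the reference orientations. *)

Section GraphFlows.
Variables (R : realFieldType) (n m : nat) (src tgt : 'I_m -> 'I_n).

Definition sub_adj (A : pred 'I_m) : rel 'I_n :=
  fun u v => [exists e, A e &&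
    (((src e == u) && (tgt e == v)) || ((src e == v) && (tgt e == u)))].

Definition connected_graph : Prop :=
  forall u v : 'I_n, connect (sub_adj predT) u v.

Definition otail (o : 'I_m * bool) : 'I_n := if o.2 then src o.1 else tgt o.1.
Definition ohead (o : 'I_m * bool) : 'I_n := if o.2 then tgt o.1 else src o.1.

Definition is_flow (x : 'rV[R]_m) : Prop :=
  forall v : 'I_n,
    \sum_(e | src e == v) x 0 e + \sum_(e | tgt e == v) (- x 0 e) = 0.

Definition is_integral (x : 'rV[R]_m) : Prop :=
  forall e, exists z : int, x 0 e = z%:~R.

Definition in_Lambda (x : 'rV[R]_m) : Prop := is_flow x /\ is_integral x.

Definition incidence : 'M[R]_(m, n) :=
  \matrix_(e, v) ((src e == v)%:R - (tgt e == v)%:R).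
Definition Hmx : 'M[R]_m := kermx incidence.

Definition dot (x y : 'rV[R]_m) : R := \sum_e x 0 e * y 0 e.
Definition q (x : 'rV[R]_m) : R := dot x x.

Definition Vcell (lam : 'rV[R]_m) (x : 'rV[R]_m) : Prop :=
  is_flow x /\ forall mu, in_Lambda mu -> q (x - lam) <= q (x - mu).

(* genus (first Betti number) of the underlying graph of supp(x):
   its edges are those e with x_e <> 0 (exactly one of e, \bar e is in supp);
   b1 = #edges - #vertices + #components (isolated vertices cancel). *)
Definition supp_edges (x : 'rV[R]_m) : pred 'I_m := fun e => x 0 e != 0.
Definition genus (x : 'rV[R]_m) : nat :=
  (#|supp_edges x| + n_comp (sub_adj (supp_edges x)) 'I_n - n)%N.

Definition in_supp (x : 'rV[R]_m) (o : 'I_m * bool) : bool :=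
  if o.2 then 0 < x 0 o.1 else x 0 o.1 < 0.

Definition is_circuit (C : seq ('I_m * bool)) : Prop :=
  [/\ (0 < size C)%N, uniq (map fst C), uniq (map otail C)
    & cycle (fun a b => ohead a == otail b) C].

Definition xD (D : seq ('I_m * bool)) : 'rV[R]_m :=
  \row_e (if (e, true) \in D then 1 else if (e, false) \in D then -1 else 0).

Definition in_affine_codim (S : 'rV[R]_m -> Prop) (k : nat) : Prop :=
  exists (a : 'rV[R]_m) (U : 'M[R]_m),
    [/\ (a <= Hmx)%MS, (U <= Hmx)%MS, (\rank U + k)%N = \rank Hmx
      & forall x, S x -> (x - a <= U)%MS].

Definition affine_dim (S : 'rV[R]_m -> Prop) (d : nat) : Prop :=
  (exists (a : 'rV[R]_m) (U : 'M[R]_m),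
     (\rank U <= d)%N /\ forall x, S x -> (x - a <= U)%MS) /\
  (exists (p0 : 'rV[R]_m) (P : 'M[R]_(d, m)),
     [/\ S p0, forall i, S (p0 + row i P) & \rank P = d]).

(* F is a face of the convex set K (faces of polytopes are exposed) *)
Definition is_face (K F : 'rV[R]_m -> Prop) : Prop :=
  exists (f : 'rV[R]_m) (c : R),
    (forall x, K x -> dot f x <= c) /\
    (forall x, F x <-> (K x /\ dot f x = c)).

Definition is_facet (K F : 'rV[R]_m -> Prop) : Prop :=
  is_face K F /\ exists d, affine_dim F d /\ (d + 1)%N = \rank Hmx.

End GraphFlows.

(* Main.v *)
Require Import Defs.
From HB Require Import structures.
From mathcomp Require Import all_boot all_order all_algebra.
From Stdlib Require Import Lia.
Import Order.TTheory GRing.Theory Num.Theory.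
Local Open Scope ring_scope.

Module A1.
Set Implicit Arguments. Unset Strict Implicit. Unset Printing Implicit Defensive.
Local Open Scope ring_scope.
Set Implicit Arguments. Unset Strict Implicit. Unset Printing Implicit Defensive.

Section Aux.
Variables (R : realFieldType) (n m : nat) (src tgt : 'I_m -> 'I_n).
Implicit Types (x y z : 'rV[R]_m) (a : R).

Definition flowv (x : 'rV[R]_m) (v : 'I_n) : R :=
  \sum_e x 0 e * ((src e == v)%:R - (tgt e == v)%:R).

Lemma is_flowE x : is_flow src tgt x <-> forall v, flowv x v = 0.
Proof.
have E v : \sum_(e | src e == v) x 0 e + \sum_(e | tgt e == v) (- x 0 e) = flowv x v.
  rewrite /flowv (big_mkcond (fun e => src e == v)) (big_mkcond (fun e => tgt e == v)) -big_split /=.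
  apply: eq_bigr => e _; rewrite mulrBr; case: (src e == v); case: (tgt e == v);
    by rewrite ?mulr1 ?mulr0 ?subr0 ?add0r ?addr0 ?sub0r.
by split => h v; move: (h v); rewrite E.
Qed.

Lemma flowvD x y v : flowv (x + y) v = flowv x v + flowv y v.
Proof. by rewrite /flowv -big_split; apply: eq_bigr => e _; rewrite mxE mulrDl. Qed.
Lemma flowvZ a x v : flowv (a *: x) v = a * flowv x v.
Proof. by rewrite /flowv mulr_sumr; apply: eq_bigr => e _; rewrite mxE mulrA. Qed.
Lemma flowv0 v : flowv 0 v = 0.
Proof. by rewrite /flowv big1 // => e _; rewrite mxE mul0r. Qed.

Lemma flow_lin a x y : is_flow src tgt x -> is_flow src tgt y -> is_flow src tgt (a *: x + y).
Proof. by move=> /is_flowE hx /is_flowE hy; apply/is_flowE => v; rewrite flowvD flowvZ hx hy mulr0 addr0. Qed.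
Lemma flow0 : is_flow src tgt (0 : 'rV[R]_m).
Proof. by apply/is_flowE => v; rewrite flowv0. Qed.
Lemma flowN x : is_flow src tgt x -> is_flow src tgt (- x).
Proof. move=> h; rewrite -scaleN1r -[_ *: x]addr0; exact: flow_lin h flow0. Qed.
Lemma flowD x y : is_flow src tgt x -> is_flow src tgt y -> is_flow src tgt (x + y).
Proof. move=> hx hy; rewrite -[x]scale1r; exact: flow_lin. Qed.
Lemma flowB x y : is_flow src tgt x -> is_flow src tgt y -> is_flow src tgt (x - y).
Proof. by move=> hx hy; apply: flowD => //; apply: flowN. Qed.

Lemma flow_Hmx x : is_flow src tgt x <-> (x <= Hmx R src tgt)%MS.
Proof.
have E v : (x *m incidence R src tgt) 0 v = flowv x v.
  by rewrite !mxE; apply: eq_bigr => e _; rewrite mxE.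
rewrite /Hmx; split.
  move=> /is_flowE h; apply/sub_kermxP; apply/rowP => v; rewrite E h mxE //.
move=> /sub_kermxP /rowP h; apply/is_flowE => v; move: (h v); rewrite E mxE //.
Qed.

Notation dot := (@dot R m).
Notation q := (@q R m).
Lemma dotC x y : dot x y = dot y x.
Proof. by apply: eq_bigr => e _; rewrite mulrC. Qed.
Lemma dotDr x y z : dot x (y + z) = dot x y + dot x z.
Proof. by rewrite /dot -big_split; apply: eq_bigr => e _; rewrite mxE mulrDr. Qed.
Lemma dotZr a x y : dot x (a *: y) = a * dot x y.
Proof. by rewrite /dot mulr_sumr; apply: eq_bigr => e _; rewrite mxE mulrCA. Qed.
Lemma dotNr x y : dot x (- y) = - dot x y.
Proof. by rewrite -scaleN1r dotZr mulN1r. Qed.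
Lemma dotBr x y z : dot x (y - z) = dot x y - dot x z.
Proof. by rewrite dotDr dotNr. Qed.
Lemma dotDl x y z : dot (x + y) z = dot x z + dot y z.
Proof. by rewrite dotC dotDr !(dotC z). Qed.
Lemma dotBl x y z : dot (x - y) z = dot x z - dot y z.
Proof. by rewrite dotC dotBr !(dotC z). Qed.
Lemma dotZl a x y : dot (a *: x) y = a * dot x y.
Proof. by rewrite dotC dotZr dotC. Qed.
Lemma dot0r x : dot x 0 = 0.
Proof. by rewrite /dot big1 // => e _; rewrite mxE mulr0. Qed.
Lemma abc_aux (a b c : R) : a - b - (b - c) = a - 2 * b + c.
Proof. by rewrite mulr_natl mulr2n !opprD opprK !addrA. Qed.
Lemma qB x y : q (x - y) = q x - 2 * dot x y + q y.
Proof. by rewrite /q dotBl !dotBr (dotC y x) abc_aux. Qed.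
Lemma qD x y : q (x + y) = q x + 2 * dot x y + q y.
Proof. by rewrite /q dotDl !dotDr (dotC y x) mulr_natl mulr2n !addrA. Qed.
Lemma q_ge0 x : 0 <= q x.
Proof. by apply: sumr_ge0 => e _; rewrite -expr2 sqr_ge0. Qed.
Lemma q_eq0 x : q x = 0 -> x = 0.
Proof.
move=> h; apply/rowP => e; rewrite mxE.
have hp : forall i, predT i -> 0 <= x 0 i * x 0 i by move=> i _; rewrite -expr2 sqr_ge0.
have := @psumr_eq0P R _ predT (fun e => x 0 e * x 0 e) hp h e isT.
by move=> /eqP; rewrite mulf_eq0 orbb; move/eqP.
Qed.
Lemma dot_mx x y : dot x y = (x *m y^T) 0 0.
Proof. by rewrite !mxE; apply: eq_bigr => e _; rewrite mxE. Qed.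

End Aux.

End A1.
Import A1.

Module A2.
Set Implicit Arguments. Unset Strict Implicit. Unset Printing Implicit Defensive.
Local Open Scope ring_scope.
Set Implicit Arguments. Unset Strict Implicit. Unset Printing Implicit Defensive.

Section Walks.
Variables (R : realFieldType) (n m : nat) (src tgt : 'I_m -> 'I_n).
Implicit Types (x y z : 'rV[R]_m) (a : R) (o : 'I_m * bool) (W : seq ('I_m * bool)).

Local Notation otl := (Defs.otail src tgt).
Local Notation ohd := (Defs.ohead src tgt).
Local Notation flowv := (A1.flowv src tgt).
Local Notation is_flow := (Defs.is_flow src tgt).

Definition sgnb (b : bool) : R := if b then 1 else -1.
Definition uvec o : 'rV[R]_m := \row_e ((o.1 == e)%:R * sgnb o.2).
Definition chain W : 'rV[R]_m := \sum_(o <- W) uvec o.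

Fixpoint walk (u : 'I_n) W (w : 'I_n) : bool :=
  match W with [::] => u == w | o :: s => (otl o == u) && walk (ohd o) s w end.

Lemma chain_nil : chain [::] = 0. Proof. by rewrite /chain big_nil. Qed.
Lemma chain_cons o W : chain (o :: W) = uvec o + chain W. Proof. by rewrite /chain big_cons. Qed.
Lemma chain_cat W1 W2 : chain (W1 ++ W2) = chain W1 + chain W2. Proof. by rewrite /chain big_cat. Qed.
Lemma chainE W e : chain W 0 e = \sum_(o <- W) (o.1 == e)%:R * sgnb o.2.
Proof. by rewrite /chain summxE; apply: eq_bigr => o _; rewrite mxE. Qed.

Lemma chain_count W e b : (forall o, o \in W -> o.1 = e -> o.2 = b) ->
  chain W 0 e = (count (fun o => o.1 == e) W)%:R * sgnb b.
Proof.
elim: W => [|o W IH] h; first by rewrite chain_nil mxE mul0r.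
rewrite chain_cons mxE IH; last by move=> o' ho'; apply: h; rewrite inE ho' orbT.
rewrite mxE /= natrD mulrDl; congr (_ + _).
case: eqP => [he|]; last by rewrite !mul0r.
by rewrite (h o (mem_head _ _) he).
Qed.

Lemma flowv_uvec o v : flowv (uvec o) v = (otl o == v)%:R - (ohd o == v)%:R.
Proof.
rewrite /flowv (bigD1 o.1) //= big1 ?addr0; last first.
  by move=> e /negbTE he; rewrite mxE eq_sym he mul0r mul0r.
rewrite mxE eqxx mul1r /Defs.otail /Defs.ohead.
by case: o => e [] /=; rewrite /sgnb ?mul1r ?mulN1r ?opprB.
Qed.

Lemma flowv_chain u W w v : walk u W w -> flowv (chain W) v = (u == v)%:R - (w == v)%:R.
Proof.
elim: W u => [|o W IH] u /=.
  by move=> /eqP ->; rewrite chain_nil flowv0 subrr.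
move=> /andP [/eqP ho hw]; rewrite chain_cons flowvD flowv_uvec (IH _ hw) ho.
by rewrite addrA subrK.
Qed.

Lemma chain_flow u W : walk u W u -> is_flow (chain W).
Proof. by move=> h; apply/is_flowE => v; rewrite (flowv_chain v h) subrr. Qed.

Lemma walk_cat u W1 W2 w : walk u (W1 ++ W2) w <-> exists t, walk u W1 t /\ walk t W2 w.
Proof.
elim: W1 u => [|o W1 IH] u /=.
  by split; [move=> h; exists u; rewrite eqxx | move=> [t [/eqP -> h]]].
split.
  move=> /andP [ho /IH [t [h1 h2]]]; exists t; by rewrite ho h1.
by move=> [t [/andP [ho h1] h2]]; rewrite ho /=; apply/IH; exists t.
Qed.

Lemma in_supp_uniq z o o' : in_supp z o -> in_supp z o' -> o.1 = o'.1 -> o = o'.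
Proof.
case: o => e b; case: o' => e' b' /=; rewrite /in_supp /= => h h' he; subst e'.
case: b h; case: b' h' => // h h'.
  by have := lt_trans h' h; rewrite ltxx.
by have := lt_trans h h'; rewrite ltxx.
Qed.

Lemma in_supp_ne0 z o : in_supp z o -> z 0 o.1 != 0.
Proof. by case: o => e [] /=; rewrite /in_supp /= => h; rewrite ?(gt_eqF h) ?(lt_eqF h). Qed.

Lemma in_supp_sgn z e : z 0 e != 0 -> in_supp z (e, 0 < z 0 e).
Proof.
rewrite /in_supp /=; case: ifP => // /negbT; rewrite -leNgt => h1 h2.
by rewrite lt_neqAle h1 h2.
Qed.

Lemma in_supp_rev z o : z 0 o.1 != 0 -> ~~ in_supp z o -> in_supp z (o.1, ~~ o.2).
Proof.
case: o => e [] /=; rewrite /in_supp /= => h.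
  by rewrite -leNgt le_eqVlt (negbTE h).
by rewrite -leNgt le_eqVlt eq_sym (negbTE h).
Qed.

Lemma uvec_rev o : uvec (o.1, ~~ o.2) = - uvec o.
Proof. by apply/rowP => e; rewrite !mxE /=; case: o.2; rewrite /sgnb /= ?mulrN ?opprK. Qed.
Lemma otl_rev o : otl (o.1, ~~ o.2) = ohd o.
Proof. by case: o => e []. Qed.
Lemma ohd_rev o : ohd (o.1, ~~ o.2) = otl o.
Proof. by case: o => e []. Qed.

Lemma sum_delta (S : pred 'I_n) (b : 'I_n) : \sum_v (S v)%:R * (b == v)%:R = (S b)%:R :> R.
Proof.
rewrite (bigD1 b) //= eqxx mulr1 big1 ?addr0 // => v /negbTE hv.
by rewrite eq_sym hv mulr0.
Qed.

Lemma cut_sum z (S : pred 'I_n) :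
  \sum_v (S v)%:R * flowv z v = \sum_e z 0 e * ((S (src e))%:R - (S (tgt e))%:R).
Proof.
rewrite /A1.flowv.
under eq_bigr do rewrite mulr_sumr.
rewrite exchange_big /=; apply: eq_bigr => e _.
under eq_bigr do rewrite mulrCA.
rewrite -mulr_sumr; congr (_ * _).
under eq_bigr do rewrite mulrBr.
by rewrite sumrB !sum_delta.
Qed.

Definition srel z : rel 'I_n := fun u v => [exists o, [&& in_supp z o, otl o == u & ohd o == v]].

Lemma path_walk z u p : path (srel z) u p -> exists Q, walk u Q (last u p) && all (in_supp z) Q.
Proof.
elim: p u => [|v p IH] u /=; first by exists [::]; rewrite /= eqxx.
move=> /andP [/existsP [o /and3P [ho /eqP hu /eqP hv]] /IH [Q /andP [hQ hQs]]].
by exists (o :: Q); rewrite /= hu eqxx hv hQ ho hQs.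
Qed.

Lemma cyc_exists z : is_flow z -> forall o0, in_supp z o0 ->
  exists Q, walk (ohd o0) Q (otl o0) && all (in_supp z) Q.
Proof.
move=> hz [e0 b0] h0.
case: (boolP (connect (srel z) (ohd (e0,b0)) (otl (e0,b0)))).
  by move=> /connectP [p hp ->]; apply: path_walk hp.
move=> hn; exfalso.
pose S := connect (srel z) (ohd (e0,b0)).
have key : forall o, in_supp z o -> S (otl o) -> S (ohd o).
  move=> o ho hs; apply: (connect_trans hs); apply: connect1; apply/existsP; exists o.
  by rewrite ho !eqxx.
have hh : S (ohd (e0,b0)) by apply: connect0.
have hn' : ~~ S (otl (e0,b0)) by [].
clearbody S; clear hn.
have hsum := cut_sum z S.
have h0s : \sum_v (S v)%:R * flowv z v = 0.
  by apply: big1 => v _; move/is_flowE: hz => ->; rewrite mulr0.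
rewrite h0s in hsum.
have hle : forall e, z 0 e * ((S (src e))%:R - (S (tgt e))%:R) <= 0.
  move=> e; case hs: (S (src e)); case ht: (S (tgt e)); rewrite /= ?subrr ?mulr0 //.
    rewrite subr0 mulr1; rewrite leNgt; apply/negP => hp.
    have := key (e, true); rewrite /in_supp /Defs.otail /Defs.ohead /= hp hs ht => /(_ isT isT).
    done.
  rewrite sub0r mulrN1 oppr_le0 leNgt; apply/negP => hp.
  have := key (e, false); rewrite /in_supp /Defs.otail /Defs.ohead /= hp hs ht => /(_ isT isT).
  done.
have hlt : z 0 e0 * ((S (src e0))%:R - (S (tgt e0))%:R) < 0.
  move: h0 hh hn'; case: b0 => /=; rewrite /in_supp /Defs.otail /Defs.ohead /= => h0 -> /negbTE ->.
    by rewrite sub0r mulrN1 oppr_lt0.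
  by rewrite subr0 mulr1.
move: hsum; rewrite (bigD1 e0) //= => /esym /eqP; rewrite lt_eqF //.
have : \sum_(e | e != e0) z 0 e * ((S (src e))%:R - (S (tgt e))%:R) <= 0.
  by apply: sumr_le0 => e _; apply: hle.
move=> h2; apply: (le_lt_trans (lerD (lexx _) h2)); rewrite addr0 //.
Qed.

End Walks.

End A2.
Import A2.

Module A3.
Set Implicit Arguments. Unset Strict Implicit. Unset Printing Implicit Defensive.
Local Open Scope ring_scope.
Set Implicit Arguments. Unset Strict Implicit. Unset Printing Implicit Defensive.

Lemma ab5 (V : zmodType) (A X B Y C : V) : A + (X + (B + (Y + C))) = (X + B) + (A + (Y + C)).
Proof. by rewrite [LHS]addrCA -[RHS]addrA; congr (_ + _); rewrite addrCA. Qed.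
Lemma ab6 (R : ringType) (V : lmodType R) (A X B Q : V) : A + (X + B) = (-1) *: (- X + Q) + (A + (Q + B)).
Proof. by rewrite scaleN1r opprD opprK -addrA [- Q + _]addrCA addKr addrCA. Qed.

Lemma split_nonuniq (T U : eqType) (f : T -> U) s : ~~ uniq (map f s) ->
  exists s1 x s2 y s3, s = s1 ++ x :: s2 ++ y :: s3 /\ f x = f y.
Proof.
elim: s => [|x s IH] //=; rewrite negb_and negbK; case/orP.
  move=> /mapP [y hy hxy]; case/splitPr: hy => s2 s3.
  by exists [::], x, s2, y, s3.
move=> /IH [s1 [x' [s2 [y [s3 [-> h]]]]]].
by exists (x :: s1), x', s2, y, s3.
Qed.

Section Decomp.
Variables (R : realFieldType) (n m : nat) (src tgt : 'I_m -> 'I_n).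
Implicit Types (x y z : 'rV[R]_m) (a : R) (o : 'I_m * bool) (W : seq ('I_m * bool)).
Local Notation otl := (Defs.otail src tgt).
Local Notation ohd := (Defs.ohead src tgt).
Local Notation is_flow := (Defs.is_flow src tgt).
Local Notation walk := (A2.walk src tgt).
Local Notation chain := (@A2.chain R m).

Definition conf (lam mu : 'rV[R]_m) :=
  in_Lambda src tgt mu /\ forall e, 0 <= mu 0 e * (lam 0 e - mu 0 e).
Definition lin_closed (P : 'rV[R]_m -> Prop) :=
  P 0 /\ forall a x y, P x -> P y -> P (a *: x + y).

Lemma int_pos (v : R) : (exists k : int, v = k%:~R) -> 0 < v -> 1 <= v.
Proof. by move=> [k ->]; rewrite ltr0z ler1z. Qed.
Lemma int_neg (v : R) : (exists k : int, v = k%:~R) -> v < 0 -> v <= -1.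
Proof.
move=> [k ->]; rewrite ltrz0 => h.
have : (k <= -1)%R by rewrite -ltzD1 addrC subrr.
by rewrite -(ler_int R) => h'; apply: (le_trans h'); rewrite rmorphN rmorph1.
Qed.

Variable lam : 'rV[R]_m.
Hypothesis hl : in_Lambda src tgt lam.

Lemma chain_circ W : uniq W -> all (in_supp lam) W -> forall e,
  chain W 0 e = ((e, 0 < lam 0 e) \in W)%:R * sgnb R (0 < lam 0 e).
Proof.
move=> hu hs e.
have hW : forall o, o \in W -> o.1 = e -> o = (e, 0 < lam 0 e).
  move=> o ho he; have hso : in_supp lam o by apply: (allP hs).
  have h2 : in_supp lam (e, 0 < lam 0 e).
    apply: in_supp_sgn; rewrite -he; exact: in_supp_ne0.
  exact: (in_supp_uniq hso h2 he).
rewrite (@chain_count R _ W e (0 < lam 0 e)); last by move=> o ho he; rewrite (hW o ho he).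
congr (_%:R * _); rewrite -(count_uniq_mem _ hu); apply: eq_in_count => o ho /=.
apply/eqP/eqP => [he|->//]; exact: hW.
Qed.

Lemma circuit_conf u W : walk u W u -> uniq (map otl W) -> all (in_supp lam) W ->
  conf lam (chain W).
Proof.
move=> hw hu hs; have hu' : uniq W by apply: map_uniq hu.
split; first split.
- exact: chain_flow hw.
- move=> e; rewrite chain_circ //.
  case: ((e, 0 < lam 0 e) \in W); case: (0 < lam 0 e); rewrite /sgnb /= ?mul1r ?mul0r.
  + by exists 1; rewrite rmorph1.
  + by exists (-1); rewrite rmorphN rmorph1.
  + by exists 0; rewrite rmorph0.
  + by exists 0; rewrite rmorph0.
- move=> e; rewrite chain_circ //.
  case hin: ((e, 0 < lam 0 e) \in W); last by rewrite /= !mul0r.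
  have hsupp : in_supp lam (e, 0 < lam 0 e) by apply: (allP hs).
  have hint := (proj2 hl) e.
  move: hsupp; rewrite /in_supp /=; case: ifP => hp /= hsupp; rewrite /sgnb mul1r.
    by rewrite mul1r subr_ge0; apply: int_pos.
  by rewrite mulN1r oppr_ge0 subr_le0; apply: int_neg.
Qed.

Lemma dwalk_P (P : 'rV[R]_m -> Prop) : lin_closed P -> (forall mu, conf lam mu -> P mu) ->
  forall u W, walk u W u -> all (in_supp lam) W -> P (chain W).
Proof.
move=> [P0 Plin] hc u W; have [k] := ubnP (size W); elim: k u W => // k IH u W hk hw hs.
case: (boolP (uniq (map otl W))) => hu; first by apply: hc; apply: circuit_conf hw hu hs.
case: (split_nonuniq hu) => [s1 [x [s2 [y [s3 [hW hxy]]]]]]; subst W.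
move/walk_cat: hw => [t [h1 /= /andP [/eqP hx /walk_cat [t' [h2 /= /andP [/eqP hy h3]]]]]].
move: hs; rewrite all_cat /= all_cat /= => /and5P [hs1 hsx hs2 hsy hs3].
have {}h2 : walk (ohd x) s2 t by rewrite -hx hxy hy.
have {}hy : otl y = t by rewrite -hxy.
have c1 : P (chain (x :: s2)).
  apply: (IH t) => /=; last by rewrite hsx hs2.
    by move: hk; rewrite !size_cat /= !size_cat /= => /ssrnat.leP h; apply/ssrnat.leP; rewrite -!plusE in h *; lia.
  by rewrite hx eqxx h2.
have c2 : P (chain (s1 ++ y :: s3)).
  apply: (IH u).
  - by move: hk; rewrite !size_cat /= !size_cat /= => /ssrnat.leP h; apply/ssrnat.leP; rewrite -!plusE in h *; lia.
  - by apply/walk_cat; exists t; rewrite /= hy eqxx h1 h3.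
  - by rewrite all_cat /= hs1 hsy hs3.
have := Plin 1 _ _ c1 c2; rewrite scale1r.
by rewrite !chain_cat !chain_cons chain_cat chain_cons -ab5.
Qed.


Lemma circuit_extract u W : walk u W u -> all (in_supp lam) W -> W != [::] ->
  exists t C, [/\ walk t C t, uniq (map otl C), all (in_supp lam) C & C != [::]].
Proof.
have [k] := ubnP (size W); elim: k u W => // k IH u W hk hw hs hn.
case: (boolP (uniq (map otl W))) => hu; first by exists u, W.
case: (split_nonuniq hu) => [s1 [x [s2 [y [s3 [hW hxy]]]]]]; subst W.
move/walk_cat: hw => [t [h1 /= /andP [/eqP hx /walk_cat [t' [h2 /= /andP [/eqP hy h3]]]]]].
move: hs; rewrite all_cat /= all_cat /= => /and5P [hs1 hsx hs2 hsy hs3].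
have {}h2 : walk (ohd x) s2 t by rewrite -hx hxy hy.
apply: (IH t (x :: s2)) => //=.
- by move: hk; rewrite !size_cat /= !size_cat /= => /ssrnat.leP h; apply/ssrnat.leP; rewrite -!plusE in h *; lia.
- by rewrite hx eqxx h2.
- by rewrite hsx hs2.
Qed.

Lemma uwalk_P (P : 'rV[R]_m -> Prop) : lin_closed P -> (forall mu, conf lam mu -> P mu) ->
  forall u W, walk u W u -> all (fun o => lam 0 o.1 != 0) W -> P (chain W).
Proof.
move=> hP hc u W; have [k] := ubnP (count (predC (in_supp lam)) W).
elim: k u W => // k IH u W hk hw hs.
case: (boolP (all (in_supp lam) W)) => ha; first exact: (dwalk_P hP hc hw ha).
case/allPn: ha => o ho hno; case/splitPr: ho hk hw hs => s1 s2 hk hw hs.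
move/walk_cat: hw => [t [h1 /= /andP [/eqP ho h2]]].
move: hs; rewrite all_cat /= => /and3P [hs1 hso hs2].
have ho' := in_supp_rev hso hno.
have [Q /andP [hQ hQs]] := cyc_exists (proj1 hl) ho'.
rewrite otl_rev ohd_rev in hQ.
have c1 : P (chain ((o.1, ~~ o.2) :: Q)).
  apply: (dwalk_P hP hc (u := ohd o)) => /=; last by rewrite ho' hQs.
  by rewrite otl_rev eqxx ohd_rev.
have hcQ : count (predC (in_supp lam)) Q = 0%N.
  by apply/eqP; rewrite -leqn0 leqNgt -has_count has_predC negbK.
have c2 : P (chain (s1 ++ Q ++ s2)).
  apply: (IH u).
  - move: hk; rewrite !count_cat /= hcQ (negbTE hno) /= add0n => /ssrnat.leP h; apply/ssrnat.leP.
    rewrite -!plusE in h *; lia.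
  - apply/walk_cat; exists t; split => //; apply/walk_cat; exists (ohd o); split => //.
    by rewrite -ho.
  - rewrite !all_cat hs1 hs2 andbT /=; apply/allP => o1 h1'.
    by apply: in_supp_ne0; apply: (allP hQs).
have := (proj2 hP) (-1) _ _ c1 c2.
by rewrite !chain_cat chain_cons chain_cons uvec_rev -ab6.
Qed.

Lemma K_P (P : 'rV[R]_m -> Prop) : lin_closed P -> (forall mu, conf lam mu -> P mu) ->
  forall y, is_flow y -> (forall e, lam 0 e = 0 -> y 0 e = 0) -> P y.
Proof.
move=> hP hc y; have [k] := ubnP #|[pred e | y 0 e != 0]|.
elim: k y => // k IH y hk hy hyl.
case: (pickP (fun f => y 0 f != 0)) => [f hf | h0]; last first.
  have -> : y = 0 by apply/rowP => e; have := h0 e; rewrite mxE /= => /negbFE /eqP.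
  exact: (proj1 hP).
have hs0 := in_supp_sgn hf.
have [Q /andP [hQ hQs]] := cyc_exists hy hs0.
set o0 := (f, 0 < y 0 f) in hs0 hQ.
set W := o0 :: Q.
have hW : walk (otl o0) W (otl o0) by rewrite /= eqxx.
have hWs : all (in_supp y) W by rewrite /= hs0 hQs.
have hWl : all (fun o => lam 0 o.1 != 0) W.
  apply/allP => o /(allP hWs) /in_supp_ne0; apply: contra => /eqP /hyl ->; done.
have cP := uwalk_P hP hc hW hWl.
set c := chain W in cP.
have hcf : c 0 f != 0.
  rewrite /c (@chain_count R _ W f (0 < y 0 f)).
    rewrite mulf_eq0 negb_or pnatr_eq0 -lt0n -has_count; apply/andP; split.
      by apply/hasP; exists o0; rewrite ?mem_head //=.
    by rewrite /sgnb; case: ifP => _; rewrite ?oppr_eq0 oner_eq0.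
  move=> o ho he; have := in_supp_uniq (allP hWs o ho) hs0 he; by move=> ->.
have hce : forall e, y 0 e = 0 -> c 0 e = 0.
  move=> e he; rewrite /c chainE big1_seq // => o /andP [_ ho].
  case: eqP => [he'|_]; last by rewrite mul0r.
  by have := in_supp_ne0 (allP hWs o ho); rewrite he' he eqxx.
set t := y 0 f / c 0 f.
set y' := (- t) *: c + y.
have hy' : is_flow y' by apply: flow_lin => //; apply: chain_flow hW.
have hy'f : y' 0 f = 0 by rewrite !mxE mulNr /t divfK // addNr.
have hy'e : forall e, y 0 e = 0 -> y' 0 e = 0 by move=> e he; rewrite !mxE (hce e he) he mulr0 addr0.
have Py' : P y'.
  apply: IH => //; last by move=> e /hyl /hy'e.
  move: hk; rewrite (cardD1 f [pred e | y 0 e != 0]) inE hf add1n ltnS => hk.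
  apply: leq_ltn_trans hk; apply: subset_leq_card; apply/subsetP => e; rewrite !inE /=.
  case: (eqVneq e f) => [->|hef]; first by rewrite hy'f eqxx.
  by apply: contra => /eqP /hy'e ->.
have -> : y = t *: c + y' by rewrite /y' addrA -scalerDl subrr scale0r add0r.
exact: (proj2 hP) t _ _ cP Py'.
Qed.

End Decomp.

End A3.
Import A3.

Module A4.
Set Implicit Arguments. Unset Strict Implicit. Unset Printing Implicit Defensive.
Local Open Scope ring_scope.
Set Implicit Arguments. Unset Strict Implicit. Unset Printing Implicit Defensive.

Section Vor.
Variables (R : realFieldType) (n m : nat) (src tgt : 'I_m -> 'I_n).
Implicit Types (x y z mu : 'rV[R]_m) (a : R).
Local Notation dot := (@Defs.dot R m).
Local Notation q := (@Defs.q R m).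
Local Notation Vcell := (Vcell src tgt).

Lemma Lambda0 : in_Lambda src tgt (0 : 'rV[R]_m).
Proof. split; first exact: flow0. by move=> e; exists 0; rewrite mxE rmorph0. Qed.
Lemma LambdaB x y : in_Lambda src tgt x -> in_Lambda src tgt y -> in_Lambda src tgt (x - y).
Proof.
move=> [fx ix] [fy iy]; split; first exact: flowB.
move=> e; have [k hk] := ix e; have [l hl] := iy e; exists (k - l).
by rewrite !mxE hk hl rmorphB.
Qed.

Lemma le_vor (c a b : R) : c <= c - a + b -> a <= b.
Proof. by rewrite -addrA lerDl addrC subr_ge0. Qed.

Lemma V0_le x mu : Vcell 0 x -> in_Lambda src tgt mu -> 2 * dot x mu <= q mu.
Proof. move=> [_ h] hm; have := h mu hm; rewrite subr0 qB; exact: le_vor. Qed.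

Lemma vor_lam lam x : Vcell 0 x -> Vcell lam x -> in_Lambda src tgt lam -> 2 * dot x lam = q lam.
Proof.
move=> h0 hl hL; apply/eqP; rewrite eq_le V0_le //=.
have := (proj2 hl) 0 Lambda0; rewrite subr0 qB => h.
by move: h; rewrite -addrA gerDl addrC subr_le0.
Qed.


Lemma vor_conf lam x : in_Lambda src tgt lam -> Vcell 0 x -> Vcell lam x ->
  forall mu, conf src tgt lam mu -> 2 * dot x mu = q mu.
Proof.
move=> hL h0 hl mu [hm hc].
apply/eqP; rewrite eq_le V0_le //=.
have h1 := V0_le h0 (LambdaB hL hm).
have h3 := vor_lam h0 hl hL.
set p := dot mu (lam - mu).
have hp : 0 <= p.
  by apply: sumr_ge0 => e _; rewrite !mxE; apply: hc.
have e1 : q lam = q mu + 2 * p + q (lam - mu) by rewrite -qD addrC subrK.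
have h4 : q mu + 2 * p + q (lam - mu) <= 2 * dot x mu + q (lam - mu).
  rewrite -e1 -h3; apply: le_trans (_ : _ <= 2 * dot x mu + 2 * dot x (lam - mu)) _.
    by rewrite -mulrDr -dotDr addrC subrK.
  by rewrite lerD2l.
rewrite lerD2r in h4; apply: le_trans h4.
by rewrite lerDl mulr_ge0.
Qed.

Lemma box_V0 x : is_flow src tgt x -> (forall e, 2 * `|x 0 e| <= 1) -> Vcell 0 x.
Proof.
move=> hx hb; split => // mu [_ hint]; rewrite subr0 qB -addrA lerDl addrC.
rewrite /q /dot mulr_sumr -sumrB; apply: sumr_ge0 => e _.
have -> : mu 0 e * mu 0 e - 2 * (x 0 e * mu 0 e) = mu 0 e * (mu 0 e - 2 * x 0 e).
  by rewrite mulrBr [mu 0 e * (2 * _)]mulrCA [mu 0 e * x 0 e]mulrC.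
have hxe := hb e.
have hx1 : 2 * x 0 e <= 1 by apply: le_trans hxe; rewrite ler_pM2l // ler_norm.
have hx2 : - (2 * x 0 e) <= 1.
  by apply: le_trans hxe; rewrite -mulrN ler_pM2l // -normrN ler_norm.
have [k hk] := hint e.
case: (ltrgt0P k) => hk0.
- have h1 : 1 <= mu 0 e by rewrite hk ler1z.
  apply: mulr_ge0; first exact: (le_trans ler01 h1).
  by rewrite subr_ge0; apply: (le_trans hx1 h1).
- have h1 : mu 0 e <= -1 by apply: int_neg; [exists k | rewrite hk ltrz0].  
  apply: mulr_le0; first by apply: (le_trans h1); rewrite oppr_le0.
  by rewrite subr_le0; apply: (le_trans h1); rewrite lerNl.
- by rewrite hk hk0 rmorph0 mul0r.
Qed.

End Vor.

End A4.
Import A4.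

Module A5.
Set Implicit Arguments. Unset Strict Implicit. Unset Printing Implicit Defensive.
Local Open Scope ring_scope.
Set Implicit Arguments. Unset Strict Implicit. Unset Printing Implicit Defensive.

Lemma rank_sel (R : fieldType) (p N : nat) (B : 'M[R]_(p, N)) (S : {pred 'I_p}) (sel : 'I_p -> 'I_N) :
  (forall i j, i \in S -> j \in S -> B i (sel j) = (i == j)%:R) -> (#|S| <= \rank B)%N.
Proof.
move=> hB.
pose W := \matrix_(i < #|S|) row (enum_val i) B.
pose T := \matrix_(j < N, k < #|S|) ((j == sel (enum_val k))%:R : R).
have hWT : W *m T = 1%:M.
  apply/matrixP => i k; rewrite !mxE.
  rewrite (bigD1 (sel (enum_val k))) //= big1 ?addr0; last first.
    by move=> j /negbTE hj; rewrite !mxE hj mulr0.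
  rewrite !mxE eqxx mulr1 hB ?enum_valP //.
  by rewrite (inj_eq enum_val_inj).
have h1 : (\rank (W *m T) <= \rank W)%N by apply: mxrankM_maxl.
rewrite hWT mxrank1 in h1; apply: (leq_trans h1); apply: mxrankS.
by apply/row_subP => i; rewrite rowK row_sub.
Qed.

Section Rank.
Variables (R : realFieldType) (n m : nat) (src tgt : 'I_m -> 'I_n).
Variable lam : 'rV[R]_m.
Implicit Types (x y z : 'rV[R]_m).

Definition dsupp : 'rV[R]_m := \row_e ((lam 0 e != 0)%:R).
Definition Ds := diag_mx dsupp.
Definition incs := Ds *m incidence R src tgt.
Definition Kmx := (kermx incs :&: Ds)%MS.

Lemma yDs y : (forall e, lam 0 e = 0 -> y 0 e = 0) -> y *m Ds = y.
Proof.
move=> h; apply/rowP => e; rewrite mul_mx_diag !mxE.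
case: (eqVneq (lam 0 e) 0) => [/h ->|_]; by rewrite ?mul0r ?mulr1.
Qed.

Lemma Kmx_char y : (y <= Kmx)%MS <-> is_flow src tgt y /\ (forall e, lam 0 e = 0 -> y 0 e = 0).
Proof.
rewrite sub_capmx; split.
  move=> /andP [/sub_kermxP hk /submxP [w hw]].
  have hs : forall e, lam 0 e = 0 -> y 0 e = 0.
    by move=> e he; rewrite hw mul_mx_diag !mxE he eqxx mulr0.
  split=> //; apply/flow_Hmx; apply/sub_kermxP; rewrite -(yDs hs) -mulmxA; exact: hk.
move=> [hf hs]; apply/andP; split.
  by apply/sub_kermxP; rewrite mulmxA yDs //; apply/sub_kermxP; apply/flow_Hmx.
by rewrite -(yDs hs) submxMl.
Qed.

Lemma Kmx_H : (Kmx <= Hmx R src tgt)%MS.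
Proof. by apply/row_subP => i; apply/flow_Hmx; apply: (proj1 (proj1 (Kmx_char _) (row_sub i Kmx))). Qed.

Local Notation A := (sub_adj src tgt (supp_edges lam)).

Lemma A_sym : connect_sym A.
Proof.
apply: sym_connect_sym => u v; rewrite /sub_adj; apply/existsP/existsP => [] [e he]; exists e;
  by move: he; rewrite orbC.
Qed.

Lemma rank_Ds : (#|supp_edges lam| <= \rank Ds)%N.
Proof.
have := @rank_sel R m m Ds (supp_edges lam) id.
apply => i j hi hj; rewrite !mxE.
by move: hi; rewrite /supp_edges unfold_in => ->.
Qed.

Lemma rank_incs : (\rank incs + n_comp A 'I_n <= n)%N.
Proof.
pose B := \matrix_(u < n, v < n) ((fingraph.root A v == u)%:R : R).
have h1 : (#|roots A| <= \rank B)%N.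
  apply: (@rank_sel R n n B (roots A) id) => i j hi hj /=; rewrite mxE.
  by move: hj; rewrite unfold_in => /eqP ->; rewrite eq_sym.
have h2 : (B <= kermx incs^T)%MS.
  apply/sub_kermxP; apply/matrixP => u e; rewrite /B /incs mul_diag_mx !mxE.
  under eq_bigr do rewrite !mxE.
  case: (eqVneq (lam 0 e) 0) => he.
    by rewrite big1 // => v _; rewrite /= mul0r mulr0.
  have hc : fingraph.root A (src e) = fingraph.root A (tgt e).
    apply/eqP; rewrite (root_connect A_sym); apply: connect1; apply/existsP; exists e.
    by rewrite !eqxx /supp_edges he.
  rewrite /=.
  under eq_bigr do rewrite mul1r mulrBr.
  rewrite sumrB.
  have sd : forall a : 'I_n, \sum_v (fingraph.root A v == u)%:R * (a == v)%:R = (fingraph.root A a == u)%:R :> R.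
    move=> a; rewrite (bigD1 a) //= eqxx mulr1 big1 ?addr0 // => v /negbTE hv.
    by rewrite [a == v]eq_sym hv mulr0.
  by rewrite !sd hc subrr.
have h3 := mxrankS h2; rewrite mxrank_ker mxrank_tr in h3.
have h4 : n_comp A 'I_n = #|roots A| by apply: eq_card => v; rewrite !inE andbT.
rewrite h4; have h5 := rank_leq_col incs.
move: (leq_trans h1 h3) h5 => /ssrnat.leP ha /ssrnat.leP hb; apply/ssrnat.leP.
rewrite -!plusE -!minusE in ha hb *; lia.
Qed.

Lemma Kmx_rank : (genus src tgt lam <= \rank Kmx)%N.
Proof.
rewrite /genus.
have h1 := mxrank_sum_cap (kermx incs) Ds.
have h2 := rank_leq_col (kermx incs + Ds)%MS.
rewrite -/Kmx mxrank_ker in h1.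
have h3 := rank_Ds; have h4 := rank_incs; have h5 := rank_leq_row incs.
move: h1 h2 h3 h4 h5 => /eqP h1 /ssrnat.leP h2 /ssrnat.leP h3 /ssrnat.leP h4 /ssrnat.leP h5.
move/eqP: h1 => h1; apply/ssrnat.leP.
rewrite -!plusE -!minusE in h1 h2 h3 h4 h5 *; lia.
Qed.

End Rank.

End A5.
Import A5.

Module A6.
Set Implicit Arguments. Unset Strict Implicit. Unset Printing Implicit Defensive.
Local Open Scope ring_scope.
Set Implicit Arguments. Unset Strict Implicit. Unset Printing Implicit Defensive.

Lemma submx_sub (F : fieldType) (p1 p2 N : nat) (A B : 'M[F]_(p1, N)) (C : 'M[F]_(p2, N)) :
  (A <= C)%MS -> (B <= C)%MS -> (A - B <= C)%MS.
Proof. by move=> hA hB; apply: addmx_sub => //; rewrite -scaleN1r scalemx_sub. Qed.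

Lemma pad (F : fieldType) (N g : nat) (U0 H : 'M[F]_N) : (U0 <= H)%MS -> (\rank U0 + g <= \rank H)%N ->
  exists U : 'M[F]_N, [/\ (U0 <= U)%MS, (U <= H)%MS & (\rank U + g)%N = \rank H].
Proof.
have [k] := ubnP (\rank H - \rank U0)%N; elim: k U0 => // k IH U0 hk hU hr.
case: (eqVneq (\rank U0 + g)%N (\rank H)) => [he|hne]; first by exists U0.
have hlt : (\rank U0 + g < \rank H)%N by rewrite ltn_neqAle hne hr.
have : ~~ (H <= U0)%MS.
  apply/negP => /mxrankS h; move: hlt; rewrite ltnNge; apply/negP/negPn.
  by apply: leq_trans h _; rewrite leq_addr.
case/row_subPn => i hi.
pose U1 := (U0 + row i H)%MS.
have h1 : (\rank U1 <= \rank U0 + 1)%N.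
  apply: leq_trans (mxrank_adds_leqif U0 (row i H)).1 _.
  by rewrite leq_add2l rank_leq_row.
have h2 : (\rank U0 < \rank U1)%N.
  have : (U0 < U1)%MS.
    rewrite ltmxE addsmxSl /=; apply/negP => h; case/negP: hi.
    exact: submx_trans (addsmxSr U0 (row i H)) h.
  by rewrite ltmxErank => /andP [].
have hU1 : (U1 <= H)%MS by rewrite addsmx_sub hU row_sub.
have [U [hU1U hUH hrk]] : exists U : 'M[F]_N, [/\ (U1 <= U)%MS, (U <= H)%MS & (\rank U + g)%N = \rank H].
  apply: IH => //.
  - move: hk h1 h2 hlt => /ssrnat.leP ha /ssrnat.leP hb /ssrnat.leP hc /ssrnat.leP hd; apply/ssrnat.leP.
    rewrite -!plusE -!minusE in ha hb hc hd *; lia.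
  - move: h1 h2 hlt => /ssrnat.leP hb /ssrnat.leP hc /ssrnat.leP hd; apply/ssrnat.leP.
    rewrite -!plusE in hb hc hd *; lia.
by exists U; split => //; apply: submx_trans hU1U; apply: addsmxSl.
Qed.

Lemma walk_path (n m : nat) (src tgt : 'I_m -> 'I_n) s : forall o t,
  walk src tgt (Defs.ohead src tgt o) s t ->
  path (fun a b => Defs.ohead src tgt a == Defs.otail src tgt b) o s &&
  (Defs.ohead src tgt (last o s) == t).
Proof.
elim: s => [|o' s IH] o t /=; first by [].
move=> /andP [/eqP h hw]; rewrite h eqxx /=; exact: IH.
Qed.

Lemma walk_cycle (n m : nat) (src tgt : 'I_m -> 'I_n) t o s :
  walk src tgt t (o :: s) t -> cycle (fun a b => Defs.ohead src tgt a == Defs.otail src tgt b) (o :: s).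
Proof.
move=> /= /andP [/eqP ho hw]; rewrite /cycle rcons_path ho; exact: walk_path.
Qed.

Section Main.
Variables (R : realFieldType) (n m : nat) (src tgt : 'I_m -> 'I_n).
Variable lam : 'rV[R]_m.
Hypothesis hl : in_Lambda src tgt lam.
Variable x0 : 'rV[R]_m.
Hypothesis hx00 : Vcell src tgt 0 x0.
Hypothesis hx0l : Vcell src tgt lam x0.
Local Notation K := (Kmx src tgt lam).
Local Notation H := (Hmx R src tgt).
Definition U0 := (H :&: kermx K^T)%MS.

Lemma S_sub x : Vcell src tgt 0 x -> Vcell src tgt lam x -> (x - x0 <= U0)%MS.
Proof.
move=> h0 hx.
have hK : forall y, (y <= K)%MS -> dot (x - x0) y = 0.
  move=> y /Kmx_char [hy hyl].
  apply: (K_P hl (P := fun y => dot (x - x0) y = 0)) => //.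
    split; first exact: dot0r.
    by move=> a u v hu hv; rewrite dotDr dotZr hu hv mulr0 addr0.
  move=> mu hmu; rewrite dotBl; apply/eqP; rewrite subr_eq0; apply/eqP.
  have e1 := vor_conf hl h0 hx hmu; have e2 := vor_conf hl hx00 hx0l hmu.
  apply: (@mulfI _ 2); first by rewrite pnatr_eq0.
  by rewrite e1 e2.
rewrite sub_capmx; apply/andP; split.
  by apply/flow_Hmx; apply: flowB; [exact: h0.1 | exact: hx00.1].
apply/sub_kermxP; apply/rowP => j; rewrite !mxE -[RHS](hK (row j K) (row_sub j K)).
by apply: eq_bigr => e _; rewrite !mxE.
Qed.

Lemma U0_rank : (\rank U0 + \rank K <= \rank H)%N.
Proof.
have hcap : (U0 :&: K)%MS = 0.
  apply/eqP; rewrite -submx0; apply/row_subP => i.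
  set r := row i (U0 :&: K)%MS.
  have hr1 : (r <= U0)%MS by apply: submx_trans (row_sub i _) (capmxSl _ _).
  have hr2 : (r <= K)%MS by apply: submx_trans (row_sub i _) (capmxSr _ _).
  have hr3 : r *m K^T = 0.
    by apply/sub_kermxP; apply: submx_trans hr1 _; apply: capmxSr.
  case/submxP: hr2 => w hw.
  have : q r = 0.
    by rewrite /q dot_mx {2}hw trmx_mul mulmxA hr3 mul0mx mxE.
  by move/q_eq0 ->; rewrite sub0mx.
rewrite -mxrank_disjoint_sum //; apply: mxrankS.
by rewrite addsmx_sub capmxSl Kmx_H.
Qed.

End Main.

End A6.
Import A6.

Unset Implicit Arguments.

Lemma circ_facts (R : realFieldType) (m : nat) (lam : 'rV[R]_m) (C : seq ('I_m * bool)) :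
  uniq C -> all (in_supp lam) C -> lam = chain R C ->
  (forall o, in_supp lam o = (o \in C)) /\ lam = xD R C.
Proof.
move=> hu hs hlc.
have hcc := chain_circ hu hs.
have memS : forall o, o \in C -> in_supp lam o by move=> o ho; apply: (allP hs).
split.
  move=> o; apply/idP/idP; last exact: memS.
  move=> ho; have hne := in_supp_ne0 ho.
  have hoe : o = (o.1, 0 < lam 0 o.1) by apply: in_supp_uniq ho (in_supp_sgn hne) _.
  move: hne; rewrite {1}hlc hcc; case hm : ((o.1, 0 < lam 0 o.1) \in C).
    by rewrite hoe hm.
  by rewrite mul0r eqxx.
apply/rowP => e; rewrite {1}hlc hcc mxE.
have hT : (e, true) \in C -> 0 < lam 0 e by move/memS.
have hF : (e, false) \in C -> lam 0 e < 0 by move/memS.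
case: (boolP (0 < lam 0 e)) => hp.
  case: ((e, true) \in C) / boolP => hin; first by rewrite /sgnb mul1r.
  case: ((e, false) \in C) / boolP => hin2; last by rewrite mul0r.
  by have := lt_trans (hF hin2) hp; rewrite ltxx.
case: ((e, true) \in C) / boolP => hin; first by rewrite (hT hin) in hp.
case: ((e, false) \in C) / boolP => hin2; by rewrite /sgnb ?mul1r ?mul0r.
Qed.

Theorem mainTheorem3 (R : realFieldType) (n m : nat) (src tgt : 'I_m -> 'I_n)
  (Gconn : connected_graph src tgt)
  (lam : 'rV[R]_m) (hlam : in_Lambda src tgt lam)
  (hne : exists x, Vcell src tgt 0 x /\ Vcell src tgt lam x) :
  in_affine_codim src tgt
    (fun x => Vcell src tgt 0 x /\ Vcell src tgt lam x) (genus src tgt lam)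
  /\
  (is_facet src tgt (Vcell src tgt 0)
     (fun x => Vcell src tgt 0 x /\ Vcell src tgt lam x) ->
   exists C : seq ('I_m * bool),
     [/\ is_circuit src tgt C,
         forall o, in_supp lam o = (o \in C)
       & lam = xD R C]).
Proof.
have [x0 [hx00 hx0l]] := hne.
have hUr := U0_rank src tgt lam.
have hU0H : (U0 src tgt lam <= Hmx R src tgt)%MS by apply: capmxSl.
split.
  have hg := Kmx_rank src tgt lam.
  have [U [hU0U hUH hrk]] := @pad _ _ (genus src tgt lam) _ _ hU0H
    (leq_trans (leq_add (leqnn _) hg) hUr).
  exists x0, U; split => //; first by apply/flow_Hmx; exact: hx00.1.
  by move=> x [h0 h1]; apply: submx_trans hU0U; apply: S_sub.
move=> [_ [d [[[a [U [hUr' hU]]] [p0 [P [hp0 hPi hrkP]]]] hd]]].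
have hPU0 : (P <= U0 src tgt lam)%MS.
  apply/row_subP => i.
  have -> : row i P = (p0 + row i P - x0) - (p0 - x0).
    by rewrite opprB addrA subrK addrC addKr.
  apply: submx_sub; apply: (S_sub hlam hx00 hx0l).
  - exact: (hPi i).1.
  - exact: (hPi i).2.
  - exact: hp0.1.
  - exact: hp0.2.
have hKle : (\rank (Kmx src tgt lam) <= 1)%N.
  have := mxrankS hPU0; rewrite hrkP => h.
  move: h hUr hd => /ssrnat.leP h /ssrnat.leP h' h''; apply/ssrnat.leP.
  rewrite -!plusE in h h' h'' *; lia.
case: (eqVneq lam 0) => hl0.
  exfalso.
  have hV : forall x, is_flow src tgt x -> (forall e, 2 * `|x 0 e| <= 1) -> (x - a <= U)%MS.
    move=> x hx hb; apply: hU; split; first exact: box_V0.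
    by rewrite hl0; exact: box_V0.
  have ha : (- a <= U)%MS.
    rewrite -sub0r; apply: hV; first exact: flow0.
    by move=> e; rewrite mxE normr0 mulr0 ler01.
  have hHU : (Hmx R src tgt <= U)%MS.
    apply/row_subP => i; set h := row i _.
    have hh : is_flow src tgt h by apply/flow_Hmx; apply: row_sub.
    set s := \sum_e `|h 0 e|.
    have hs0 : 0 <= s by apply: sumr_ge0 => e _; apply: normr_ge0.
    have hpos : 0 < 2 * (1 + s) by rewrite mulr_gt0 // ltr_pwDl.
    set t := (2 * (1 + s))^-1.
    have ht0 : t != 0 by rewrite invr_eq0 gt_eqF.
    have htp : 0 < t by rewrite invr_gt0.
    have hth : (t *: h - a <= U)%MS.
      apply: hV; first by rewrite -[t *: h]addr0; apply: flow_lin => //; exact: flow0.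
      have h1s : 0 < 1 + s by rewrite (lt_le_trans ltr01) // lerDl.
      move=> e; rewrite mxE normrM (gtr0_norm htp) mulrA /t invfM mulrA mulfV ?pnatr_eq0 // mul1r.
      rewrite mulrC ler_pdivrMr // mul1r.
      apply: (le_trans (_ : `|h 0 e| <= s)); last by rewrite lerDr.
      by rewrite /s (bigD1 e) //= lerDl sumr_ge0 // => j _; apply: normr_ge0.
    have : (t *: h <= U)%MS.
      by have := submx_sub hth ha; rewrite opprK subrK.
    move/(scalemx_sub t^-1); by rewrite scalerA mulVf // scale1r.
  have := mxrankS hHU; rewrite -hd => /(leq_trans)/(_ hUr').
  by rewrite addn1 ltnn.
have [f hf] : exists f, lam 0 f != 0.
  case: (pickP (fun f => lam 0 f != 0)) => [f hf | h0]; first by exists f.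
  by case/eqP: hl0; apply/rowP => e; move: (h0 e); rewrite mxE /= => /negbFE /eqP.
have hs0 := in_supp_sgn hf.
have [Q /andP [hQ hQs]] := cyc_exists hlam.1 hs0.
have hW : walk src tgt (otail src tgt (f, 0 < lam 0 f)) ((f, 0 < lam 0 f) :: Q) (otail src tgt (f, 0 < lam 0 f)).
  by rewrite /= eqxx hQ.
have hWs : all (in_supp lam) ((f, 0 < lam 0 f) :: Q) by rewrite /= hs0 hQs.
have [t [C [hC hCu hCs hCn]]] := circuit_extract hW hWs isT.
have hCu' : uniq C := map_uniq hCu.
have hCK : (chain R C <= Kmx src tgt lam)%MS.
  apply/Kmx_char; split; first exact: chain_flow hC.
  move=> e he; rewrite (chain_circ hCu' hCs) he ltxx.
  case: (boolP ((e, false) \in C)) => hin; last by rewrite mul0r.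
  by have := in_supp_ne0 (allP hCs _ hin); rewrite /= he eqxx.
have hlK : (lam <= Kmx src tgt lam)%MS by apply/Kmx_char; split; [exact: hlam.1 | by move=> e ->].
have hKl : (Kmx src tgt lam <= lam)%MS.
  have h := (mxrank_leqif_eq hlK).2.
  have h1 := mxrankS hlK; rewrite rank_rV hl0 in h1.
  have hr1 : \rank (Kmx src tgt lam) = 1%N by apply/eqP; rewrite eqn_leq hKle h1.
  move: h; rewrite rank_rV hl0 hr1 eqxx => /esym /andP [].
  done.
have [al hal] : exists al, chain R C = al *: lam by apply/sub_rVP; apply: submx_trans hKl.
have hconf := circuit_conf hlam hC hCu hCs.
have e1 := vor_conf hlam hx00 hx0l hconf.
have e2 := vor_lam hx00 hx0l hlam.
have hC0 : chain R C != 0.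
  case: C hC hCu hCs hCn hCu' hCK hal hconf e1 => [//|o s] _ _ hCs _ hCu' _ _ _ _.
  have ho := allP hCs o (mem_head _ _).
  apply/negP => /eqP /rowP /(_ o.1); rewrite (chain_circ hCu' hCs) mxE.
  have <- : o = (o.1, 0 < lam 0 o.1) by apply: in_supp_uniq ho (in_supp_sgn (in_supp_ne0 ho)) _.
  rewrite mem_head /= mul1r /sgnb; case: ifP => _ /eqP; by rewrite ?oppr_eq0 oner_eq0.
have al0 : al != 0 by apply: contraNneq hC0 => h; rewrite hal h scale0r.
have ql0 : q lam != 0 by apply/eqP => /q_eq0 h; move: hl0; rewrite h eqxx.
have hal1 : al = 1.
  move: e1; rewrite hal dotZr /q dotZl dotZr mulrCA -/(q lam) -e2 => /(mulfI al0).
  move=> h; apply: (mulIf ql0); rewrite mul1r -e2 -h.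
  by rewrite /q.
have hlc : lam = chain R C by rewrite hal hal1 scale1r.
have [hsupp hxD] := @circ_facts R m lam C hCu' hCs hlc.
exists C; split => //.
split.
- by rewrite lt0n size_eq0.
- rewrite map_inj_in_uniq // => o o' ho ho'; apply: in_supp_uniq; exact: (allP hCs).
- exact: hCu.
- by case: C hC {hCu hCs hCn hCu' hCK hal hconf e1 hC0 hlc hsupp hxD} => // o s; apply: walk_cycle.
Qed.
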